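(* For the estimators defined in the context (and assuming all matrices inverted below and in the context are invertible), $$\hat\tau_{\mathrm{pdd}}=\hat\tau^y_{\mathrm{rdd}}-(\hat\tau^w_{\mathrm{rdd}})^\top\hat\gamma_- \quad\text{exactly (numerically), for every sample.}$$ Moreover $$\hat\gamma_-=\Big[\tfrac1n\sum_{i=1}^n\omega_{i,-}Z_i(W_i^\perp)^\top\Big]^{-1}\Big\{\tfrac1n\sum_{i=1}^n\omega_{i,-}Z_iY_i^\perp\Big\}.$$ Here the residuals from local linear regressions on the running variable below the cutoff are $$Y_i^\perp=Y_i-R_{i,1}^\top\Big(\sum_{j}\omega_{j,-}R_{j,1}R_{j,1}^\top\Big)^{-1}\sum_j\omega_{j,-}R_{j,1}Y_j,$$ $$W_i^{\perp\top}=W_i^\top-R_{i,1}^\top\Big(\sum_{j}\omega_{j,-}R_{j,1}R_{j,1}^\top\Big)^{-1}\sum_j\omega_{j,-}R_{j,1}W_j^\top.$$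
   Context: Data and cutoff. The data are observations $(Y_i,W_i,D_i,Z_i)$, $i=1,\dots,n$, with $Y_i,D_i\in\mathbb{R}$ and $W_i,Z_i\in\mathbb{R}^q$. The cutoff $d^*$ is known. $K\ge0$ is a kernel and $h_n>0$ a bandwidth. Basic objects: - Kernel weights: $\omega_{i,+}=h_n^{-1}\mathbf{1}\{D_i\ge d^*\}K(|D_i-d^*|/h_n)$ and $\omega_{i,-}=h_n^{-1}\mathbf{1}\{D_i<d^*\}K(|D_i-d^*|/h_n)$. - $R_{i,1}=(1,(D_i-d^* )/h_n)^\top$ and $H_1=\mathrm{diag}(1,h_n)$. Local linear fits. For $v\in\{y,w_1,\dots,w_q\}$ (with corresponding data $Y_i$ or $W_{i,j}$) and $s\in\{+,-\}$, define $\hat\beta^v_s$ by $$H_1\hat\beta^v_s=\arg\min_\beta\sum_i\omega_{i,s}(V_i-R_{i,1}^\top\beta)^2.$$ Let $\hat\beta^v_{s,0}$ be its first component and $\hat\beta^w_{s,0}=(\hat\beta^{w_1}_{s,0},\dots,\hat\beta^{w_q}_{s,0})^\top$. Set $\hat\tau^y_{\mathrm{rdd}}=\hat\beta^y_{+,0}-\hat\beta^y_{-,0}$ and $\hat\tau^w_{\mathrm{rdd}}=\hat\beta^w_{+,0}-\hat\beta^w_{-,0}\in\mathbb{R}^q$. Local instrumental variable regression. For $s\in\{+,-\}$, $(\hat\alpha_s,\hat\gamma_s)\in\mathbb{R}^2\times\mathbb{R}^q$ solve $$\frac1n\sum_{i=1}^n\omega_{i,s}\begin{bmatrix}R_{i,1}\\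 Z_i\end{bmatrix}\big(Y_i-R_{i,1}^\top H_1\hat\alpha_s-W_i^\top\hat\gamma_s\big)=0,$$ and $\hat\alpha_{s,0}$ denotes the first component of $\hat\alpha_s$. Estimator. The placebo discontinuity estimator is $$\hat\tau_{\mathrm{pdd}}=\hat\alpha_{+,0}+(\hat\beta^w_{+,0})^\top\hat\gamma_+-\big\{\hat\alpha_{-,0}+(\hat\beta^w_{+,0})^\top\hat\gamma_-\big\}.$$ *)

(* Defs.v *)
From mathcomp Require Import all_boot all_order all_algebra.
Set Implicit Arguments. Unset Strict Implicit. Unset Printing Implicit Defensive.
Import Order.TTheory GRing.Theory Num.Theory.
Local Open Scope ring_scope.

Section PDD.
Variable R : realFieldType.
Variables (n q : nat).
(* kernel K, bandwidth h, cutoff d, running variable D *)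
Variables (K : R -> R) (h d : R) (D : 'I_n -> R).

Definition sc (A : 'M[R]_1) : R := A ord0 ord0.

Definition Rv (i : 'I_n) : 'cV[R]_2 :=
  \col_(k < 2) (if k == ord0 then 1 else (D i - d) / h).

Definition H1 : 'M[R]_2 :=
  \matrix_(a < 2, b < 2) (if a == b then (if a == ord0 then 1 else h) else 0).

(* kernel weights; pos = true gives omega_{i,+}, pos = false gives omega_{i,-} *)
Definition omega (pos : bool) (i : 'I_n) : R :=
  h^-1 * (if (if pos then d <= D i else D i < d) then 1 else 0)
       * K (`|D i - d| / h).

Definition gram (pos : bool) : 'M[R]_2 :=
  \sum_i omega pos i *: (Rv i *m (Rv i)^T).

Definition llobj (pos : bool) (V : 'I_n -> R) (b : 'cV[R]_2) : R :=
  \sum_i omega pos i * (V i - sc ((Rv i)^T *m b)) ^+ 2.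

Definition is_llfit (pos : bool) (V : 'I_n -> R) (beta : 'cV[R]_2) : Prop :=
  forall b : 'cV[R]_2, llobj pos V (H1 *m beta) <= llobj pos V b.

Definition iv_eq (pos : bool) (Y : 'I_n -> R) (W Z : 'I_n -> 'cV[R]_q)
    (alpha : 'cV[R]_2) (gamma : 'cV[R]_q) : Prop :=
  n%:R^-1 *: \sum_i omega pos i *:
     ((Y i - sc ((Rv i)^T *m H1 *m alpha) - sc ((W i)^T *m gamma))
        *: col_mx (Rv i) (Z i))
  = 0 :> 'cV[R]_(2 + q).

Definition Yperp (Y : 'I_n -> R) (i : 'I_n) : R :=
  Y i - sc ((Rv i)^T *m invmx (gram false)
              *m (\sum_j omega false j *: (Y j *: Rv j))).

(* W_i^perp, a column vector whose transpose is the formula of the paper *)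
Definition Wperp (W : 'I_n -> 'cV[R]_q) (i : 'I_n) : 'cV[R]_q :=
  ((W i)^T - (Rv i)^T *m invmx (gram false)
              *m (\sum_j omega false j *: (Rv j *m (W j)^T)))^T.

End PDD.

(* Main.v *)
Require Import Defs.
From mathcomp Require Import all_boot all_order all_algebra.
From mathcomp Require Import ring lra.
Import Order.TTheory GRing.Theory Num.Theory.
Local Open Scope ring_scope.

Lemma omega_ge0 (R : realFieldType) n (K : R -> R) h d (D : 'I_n -> R) pos i :
  (forall x, 0 <= K x) -> 0 < h -> 0 <= omega K h d D pos i.
Proof.
move=> hK hh; rewrite /omega; apply: mulr_ge0 => //; apply: mulr_ge0.
  by rewrite invr_ge0 ltW.
by case: ifP.
Qed.

Lemma quad0 (R : realFieldType) (L Q : R) :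
  0 <= Q -> (forall t, 0 <= t * (t * Q - 2 * L)) -> L = 0.
Proof.
move=> hQ H.
have hQ1 : 0 < Q + 1 by lra.
have := H (L / (Q + 1)).
set u := (Q + 1)^-1.
have hu : u * (Q + 1) = 1 by rewrite mulVf // gt_eqF.
have hu0 : 0 < u by rewrite invr_gt0.
move=> Ht.
have : 0 <= (L * u * (L * u * Q - 2 * L)) * (Q + 1) ^+ 2 by apply: mulr_ge0 => //; apply: sqr_ge0.
have -> : L * u * (L * u * Q - 2 * L) * (Q + 1) ^+ 2 = - (L ^+ 2 * (Q + 2)).
  have e : L * u * (L * u * Q - 2 * L) * (Q + 1) ^+ 2 = (L * (u * (Q+1))) * ((L * (u * (Q+1))) * Q - 2 * L * (Q+1)).
    by ring.
  by rewrite e hu; ring.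
move=> h2; have : L ^+ 2 <= 0 by nra.
move=> hL; have : L ^+ 2 == 0 by rewrite eq_le hL sqr_ge0.
by rewrite sqrf_eq0 => /eqP.
Qed.

Lemma sc_RR (R : realFieldType) (r b : 'cV[R]_2) :
  sc (r^T *m b) *: r = r *m r^T *m b.
Proof. by rewrite -mulmxA {2}(mx11_scalar (r^T *m b)) mul_mx_scalar. Qed.

Lemma llfit_normal (R : realFieldType) n (K : R -> R) h d (D : 'I_n -> R) pos V beta :
  (forall x, 0 <= K x) -> 0 < h -> is_llfit K h d D pos V beta ->
  gram K h d D pos *m (H1 h *m beta) =
  \sum_i omega K h d D pos i *: (V i *: Rv h d D i).
Proof.
move=> hK hh fit.
set b0 := H1 h *m beta.
set w := omega K h d D pos.
have A : \sum_i w i *: ((V i - sc ((Rv h d D i)^T *m b0)) *: Rv h d D i) = 0.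
  apply/matrixP => k j; rewrite (ord1 j) summxE [RHS]mxE.
  under eq_bigr do rewrite !mxE.
  set r := fun i => (if k == ord0 then 1 else (D i - d) / h).
  set e := fun i => V i - sc ((Rv h d D i)^T *m b0).
  apply: (@quad0 _ _ (\sum_i w i * (r i) ^+ 2)).
    by apply: sumr_ge0 => i _; apply: mulr_ge0; [apply: omega_ge0|apply: sqr_ge0].
  move=> t.
  have := fit (b0 + t *: delta_mx k 0); rewrite /llobj -/b0 -subr_ge0.
  have HE : forall i, sc ((Rv h d D i)^T *m (b0 + t *: delta_mx k 0))
                     = sc ((Rv h d D i)^T *m b0) + t * r i.
    by move=> i; rewrite mulmxDr -scalemxAr -colE /sc !mxE.
  suff key : \sum_i omega K h d D pos i * (V i - sc ((Rv h d D i)^T *m (b0 + t *: delta_mx k 0))) ^+ 2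
      - \sum_i omega K h d D pos i * (V i - sc ((Rv h d D i)^T *m b0)) ^+ 2 
      = t * (t * (\sum_i w i * r i ^+ 2) - 2 * (\sum_i w i * (e i * r i))) by rewrite key; exact: id.
  rewrite -sumrB !mulr_sumr -sumrB mulr_sumr; apply: eq_bigr => i _.
  rewrite HE /e /r /w; ring.
move/eqP: A; rewrite (eq_bigr (fun i => w i *: (V i *: Rv h d D i)
      - w i *: (sc ((Rv h d D i)^T *m b0) *: Rv h d D i))); last first.
  by move=> i _; rewrite scalerBl scalerBr.
rewrite sumrB subr_eq0 => /eqP ->.
rewrite /gram mulmx_suml; apply: eq_bigr => i _.
by rewrite sc_RR -scalemxAl.
Qed.

Lemma iv_split (R : realFieldType) n q (K : R -> R) h d (D : 'I_n -> R) pos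
   (Y : 'I_n -> R) (W Z : 'I_n -> 'cV[R]_q) alpha gamma :
  (0 < n)%N -> iv_eq K h d D pos Y W Z alpha gamma ->
  let c i := Y i - sc ((Rv h d D i)^T *m H1 h *m alpha) - sc ((W i)^T *m gamma) in
  \sum_i omega K h d D pos i *: (c i *: Rv h d D i) = 0 /\
  \sum_i omega K h d D pos i *: (c i *: Z i) = 0.
Proof.
move=> n0; rewrite /iv_eq => /eqP; rewrite scaler_eq0 invr_eq0 pnatr_eq0 eqn0Ngt n0 /=.
move=> /eqP S0.
set c := fun i => Y i - sc ((Rv h d D i)^T *m H1 h *m alpha) - sc ((W i)^T *m gamma).
have E : forall i, omega K h d D pos i *: ((Y i - sc ((Rv h d D i)^T *m H1 h *m alpha) - sc ((W i)^T *m gamma)) *: col_mx (Rv h d D i) (Z i))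
   = col_mx (omega K h d D pos i *: (c i *: Rv h d D i)) (omega K h d D pos i *: (c i *: Z i)).
  by move=> i; rewrite !scale_col_mx.
split.
  have := congr1 usubmx S0; rewrite raddf0 raddf_sum => HS; rewrite -[RHS]HS.
  by apply: eq_bigr => i _; rewrite E /= col_mxKu.
have := congr1 dsubmx S0; rewrite raddf0 raddf_sum => HS; rewrite -[RHS]HS.
by apply: eq_bigr => i _; rewrite E /= col_mxKd.
Qed.

Lemma sc_gen (R : realFieldType) m k (r : 'cV[R]_m) (w g : 'cV[R]_k) :
  sc (w^T *m g) *: r = r *m w^T *m g.
Proof. by rewrite -mulmxA {2}(mx11_scalar (w^T *m g)) mul_mx_scalar. Qed.

Lemma iv_upper (R : realFieldType) n q (K : R -> R) h d (D : 'I_n -> R) pos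
   (Y : 'I_n -> R) (W : 'I_n -> 'cV[R]_q) alpha gamma :
  \sum_i omega K h d D pos i *: ((Y i - sc ((Rv h d D i)^T *m H1 h *m alpha) - sc ((W i)^T *m gamma)) *: Rv h d D i) = 0 ->
  gram K h d D pos *m (H1 h *m alpha) =
  \sum_i omega K h d D pos i *: (Y i *: Rv h d D i)
  - (\sum_i omega K h d D pos i *: (Rv h d D i *m (W i)^T)) *m gamma.
Proof.
move=> H.
have E : \sum_i omega K h d D pos i *: ((Y i - sc ((Rv h d D i)^T *m H1 h *m alpha) - sc ((W i)^T *m gamma)) *: Rv h d D i)
  = \sum_i omega K h d D pos i *: (Y i *: Rv h d D i) - gram K h d D pos *m (H1 h *m alpha)
    - (\sum_i omega K h d D pos i *: (Rv h d D i *m (W i)^T)) *m gamma.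
  rewrite /gram !mulmx_suml -!sumrB; apply: eq_bigr => i _.
  rewrite -!scalemxAl -!scalerBr; congr (_ *: _).
  by rewrite !scalerBl -mulmxA !sc_gen.
move: H; rewrite E => /eqP; rewrite subr_eq0 => /eqP <-.
by rewrite opprB addrC subrK.
Qed.

Lemma entB (R : realFieldType) m k (A B : 'M[R]_(m, k)) i j : (A - B) i j = A i j - B i j.
Proof. by rewrite !mxE. Qed.

Lemma H1_0 (R : realFieldType) m h (x : 'M[R]_(2, m)) j : (H1 h *m x) 0 j = x 0 j.
Proof. by rewrite mxE big_ord_recl big_ord1 !mxE /= mul1r mul0r addr0. Qed.

Lemma scrow (R : realFieldType) q m (M : 'M[R]_(m.+1, q)) (g : 'cV[R]_q) :
  sc (((row 0 M)^T)^T *m g) = (M *m g) 0 0.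
Proof. by rewrite trmxK -row_mul /sc mxE. Qed.

Lemma scB (R : realFieldType) q (a b g : 'cV[R]_q) :
  sc ((a - b)^T *m g) = sc (a^T *m g) - sc (b^T *m g).
Proof. by rewrite raddfB /= mulmxBl /sc !mxE. Qed.

Lemma fitW (R : realFieldType) n q (K : R -> R) h d (D : 'I_n -> R) pos
   (W : 'I_n -> 'cV[R]_q) bw :
  (forall x, 0 <= K x) -> 0 < h ->
  (forall j : 'I_q, is_llfit K h d D pos (fun i => W i j ord0) (col j bw)) ->
  gram K h d D pos *m (H1 h *m bw) =
  \sum_i omega K h d D pos i *: (Rv h d D i *m (W i)^T).
Proof.
move=> hK hh fit; apply/matrixP => k j.
have := congr1 (fun M : 'cV_2 => M k 0) (@llfit_normal _ _ _ _ _ _ _ _ _ hK hh (fit j)).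
rewrite colE !mulmxA -colE mxE /= => ->.
rewrite !summxE; apply: eq_bigr => i _.
rewrite !mxE big_ord1 !mxE; ring.
Qed.
Theorem proposition1 (R : realFieldType) (n q : nat)
    (Y D : 'I_n -> R) (W Z : 'I_n -> 'cV[R]_q)
    (K : R -> R) (h d : R)
    (hK : forall x, 0 <= K x) (hh : 0 < h)
    (* local linear fits: beta^y_{+}, beta^y_{-}, and beta^w_{+}, beta^w_{-}
       whose j-th column is the fit for w_j *)
    (by_p by_m : 'cV[R]_2) (bw_p bw_m : 'M[R]_(2, q))
    (alpha_p alpha_m : 'cV[R]_2) (gamma_p gamma_m : 'cV[R]_q)
    (* invertibility assumptions *)
    (Gp_inv : gram K h d D true \in unitmx)
    (Gm_inv : gram K h d D false \in unitmx)
    (ZW_inv : (n%:R^-1 *: \sum_i omega K h d D false i *: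
                 (Z i *m (Wperp K h d D W i)^T)) \in unitmx)
    (* definitions of the estimators *)
    (fit_yp : is_llfit K h d D true Y by_p)
    (fit_ym : is_llfit K h d D false Y by_m)
    (fit_wp : forall j : 'I_q, is_llfit K h d D true (fun i => W i j ord0) (col j bw_p))
    (fit_wm : forall j : 'I_q, is_llfit K h d D false (fun i => W i j ord0) (col j bw_m))
    (iv_p : iv_eq K h d D true Y W Z alpha_p gamma_p)
    (iv_m : iv_eq K h d D false Y W Z alpha_m gamma_m) :
  let bw_p0 : 'cV[R]_q := (row ord0 bw_p)^T in
  let bw_m0 : 'cV[R]_q := (row ord0 bw_m)^T in
  let tau_y := by_p ord0 ord0 - by_m ord0 ord0 in
  let tau_w : 'cV[R]_q := bw_p0 - bw_m0 in
  let tau_pdd := alpha_p ord0 ord0 + sc (bw_p0^T *m gamma_p)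
                 - (alpha_m ord0 ord0 + sc (bw_p0^T *m gamma_m)) in
  tau_pdd = tau_y - sc (tau_w^T *m gamma_m)
  /\ gamma_m =
     invmx (n%:R^-1 *: \sum_i omega K h d D false i *:
              (Z i *m (Wperp K h d D W i)^T))
     *m (n%:R^-1 *: \sum_i omega K h d D false i *:
              (Yperp K h d D Y i *: Z i)).
Proof.
have n0 : (0 < n)%N.
  case: (posnP n) => // n0e; move: Gp_inv; rewrite /gram.
  by subst n; rewrite big_ord0 unitmxE det0 unitr0.
have Nyp := @llfit_normal _ _ _ _ _ _ _ _ _ hK hh fit_yp.
have Nym := @llfit_normal _ _ _ _ _ _ _ _ _ hK hh fit_ym.
have Nwp := @fitW _ _ _ _ _ _ _ _ _ _ hK hh fit_wp.
have Nwm := @fitW _ _ _ _ _ _ _ _ _ _ hK hh fit_wm.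
have [Up Lp] := @iv_split _ _ _ _ _ _ _ _ _ _ _ _ _ n0 iv_p.
have [Um Lm] := @iv_split _ _ _ _ _ _ _ _ _ _ _ _ _ n0 iv_m.
have Ap := @iv_upper _ _ _ _ _ _ _ _ _ _ _ _ Up.
have Am := @iv_upper _ _ _ _ _ _ _ _ _ _ _ _ Um.
have Hp : H1 h *m alpha_p = H1 h *m by_p - H1 h *m (bw_p *m gamma_p).
  apply: (can_inj (mulKmx Gp_inv)).
  by rewrite Ap -Nyp -Nwp mulmxBr !mulmxA.
have Hm : H1 h *m alpha_m = H1 h *m by_m - H1 h *m (bw_m *m gamma_m).
  apply: (can_inj (mulKmx Gm_inv)).
  by rewrite Am -Nym -Nwm mulmxBr !mulmxA.
move=> bw_p0 bw_m0 tau_y tau_w tau_pdd; split.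
  rewrite /tau_pdd /tau_y /tau_w scB /bw_p0 /bw_m0 !scrow.
  have := congr1 (fun M : 'cV_2 => M 0 0) Hp.
  have := congr1 (fun M : 'cV_2 => M 0 0) Hm.
  rewrite /= !entB !H1_0 => -> ->.
  ring.
have Hm0 : H1 h *m alpha_m = invmx (gram K h d D false) *m
     (\sum_i omega K h d D false i *: (Y i *: Rv h d D i)
      - (\sum_i omega K h d D false i *: (Rv h d D i *m (W i)^T)) *m gamma_m).
  by rewrite -Am mulKmx.
have Ei : forall i, Y i - sc ((Rv h d D i)^T *m H1 h *m alpha_m) - sc ((W i)^T *m gamma_m)
   = Yperp K h d D Y i - sc ((Wperp K h d D W i)^T *m gamma_m).
  move=> i; rewrite -mulmxA Hm0 /Yperp /Wperp trmxK.
  by rewrite !mulmxBr !mulmxBl !mulmxA /sc !entB; ring.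
have S : \sum_i omega K h d D false i *: (Yperp K h d D Y i *: Z i)
   = (\sum_i omega K h d D false i *: (Z i *m (Wperp K h d D W i)^T)) *m gamma_m.
  apply/eqP; rewrite -subr_eq0 mulmx_suml -sumrB -[X in _ == X]Lm; apply/eqP.
  apply: eq_bigr => i _; rewrite Ei -scalemxAl -sc_gen -scalerBr -scalerBl.
  by [].
by rewrite S scalemxAl mulKmx.
Qed.
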